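(* Let $P\subset\mathbb{R}^N$ be a polytope with vertex set $\{v_1,\dots,v_M\}$, and let $v:\mathbb{R}^N\to\{v_1,\dots,v_M\}$ assign to each $x$ a vertex of $P$ closest to $x$ in Euclidean norm (with some fixed tie-breaking rule). For a vertex $v_i$ let $C_1(v_i)$ denote the set of unit outward normals of supporting hyperplanes of $P$ at $v_i$, i.e. $C_1(v_i)=\{u\in\mathbb{R}^N:\|u\|=1,\ u\cdot(p-v_i)\le 0\ \text{for all } p\in P\}$. Then for each $\varepsilon>0$ there exists $D>0$ such that whenever $\|x\|>D$, $$d\Big(\frac{x}{\|x\|},\,C_1(v(x))\Big)<\varepsilon.$$
   Context: $d$ denotes Euclidean distance between a point and a set. *)

(* Defs.v *)
From HB Require Import structures.
From mathcomp Require Import all_boot all_order all_algebra.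
From mathcomp Require Import boolp classical_sets reals.
Set Implicit Arguments. Unset Strict Implicit. Unset Printing Implicit Defensive.
Import Order.TTheory GRing.Theory Num.Theory.
Local Open Scope ring_scope.
Local Open Scope classical_set_scope.

Definition dotv {R : realType} {N : nat} (u w : 'rV[R]_N) : R :=
  \sum_(i < N) u 0 i * w 0 i.
Definition enorm {R : realType} {N : nat} (x : 'rV[R]_N) : R :=
  Num.sqrt (dotv x x).

Definition edist {R : realType} {N : nat} (y : 'rV[R]_N) (C : set 'rV[R]_N) : R :=
  inf [set enorm (y - c) | c in C].

Definition convhull {R : realType} {N M : nat} (vs : 'I_M -> 'rV[R]_N) : set 'rV[R]_N :=
  [set p | exists l : 'I_M -> R, (forall i, 0 <= l i) /\ \sum_(i < M) l i = 1 /\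
                                 p = \sum_(i < M) l i *: vs i].

Definition is_vertex {R : realType} {N : nat} (P : set 'rV[R]_N) (p : 'rV[R]_N) : Prop :=
  P p /\ forall a b t, P a -> P b -> 0 < t < 1 ->
    p = (1 - t) *: a + t *: b -> a = p /\ b = p.

Definition C1 {R : realType} {N : nat} (P : set 'rV[R]_N) (w : 'rV[R]_N) : set 'rV[R]_N :=
  [set u | enorm u = 1 /\ forall p, P p -> dotv u (p - w) <= 0].

(* Main.v *)
Require Import Defs.
From HB Require Import structures.
From mathcomp Require Import all_boot all_order all_algebra.
From mathcomp Require Import boolp classical_sets reals.
From mathcomp Require Import topology normedtype derive realfun.
From mathcomp Require Import ring lra.
Import Order.TTheory GRing.Theory Num.Theory.
Import numFieldTopology.Exports numFieldNormedType.Exports.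
Local Open Scope ring_scope.
Local Open Scope classical_set_scope.
Import Defs.

Section Alg.
Context {R : realType} {N : nat}.
Implicit Types (x y z u : 'rV[R]_N).

Lemma dotvC x y : dotv x y = dotv y x.
Proof. by apply: eq_bigr => i _; rewrite mulrC. Qed.

Lemma dotvDl x y z : dotv (x + y) z = dotv x z + dotv y z.
Proof. by rewrite /dotv -big_split; apply: eq_bigr => i _; rewrite mxE mulrDl. Qed.

Lemma dotvNl x z : dotv (- x) z = - dotv x z.
Proof. by rewrite /dotv -sumrN; apply: eq_bigr => i _; rewrite mxE mulNr. Qed.

Lemma dotvBl x y z : dotv (x - y) z = dotv x z - dotv y z.
Proof. by rewrite dotvDl dotvNl. Qed.

Lemma dotvZl a x z : dotv (a *: x) z = a * dotv x z.
Proof. by rewrite /dotv mulr_sumr; apply: eq_bigr => i _; rewrite mxE mulrA. Qed.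

Lemma dotvDr x y z : dotv z (x + y) = dotv z x + dotv z y.
Proof. by rewrite dotvC dotvDl !(dotvC z). Qed.
Lemma dotvBr x y z : dotv z (x - y) = dotv z x - dotv z y.
Proof. by rewrite dotvC dotvBl !(dotvC z). Qed.
Lemma dotvZr a x z : dotv z (a *: x) = a * dotv z x.
Proof. by rewrite dotvC dotvZl dotvC. Qed.

Lemma dotv_sumr (M : nat) (F : 'I_M -> 'rV[R]_N) z :
  dotv z (\sum_(j < M) F j) = \sum_(j < M) dotv z (F j).
Proof.
rewrite /dotv exchange_big /=; apply: eq_bigr => i _.
by rewrite summxE mulr_sumr.
Qed.

Lemma dotv_ge0 x : 0 <= dotv x x.
Proof. by apply: sumr_ge0 => i _; rewrite -expr2 sqr_ge0. Qed.

Lemma enorm_ge0 x : 0 <= enorm x.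
Proof. exact: sqrtr_ge0. Qed.

Lemma enorm_sq x : enorm x ^+ 2 = dotv x x.
Proof. by rewrite /enorm sqr_sqrtr // dotv_ge0. Qed.

Lemma enorm0 : enorm (0 : 'rV[R]_N) = 0.
Proof.
rewrite /enorm /dotv big1 ?sqrtr0 // => i _; by rewrite mxE mul0r.
Qed.

Lemma enormZ a x : enorm (a *: x) = `|a| * enorm x.
Proof.
by rewrite /enorm dotvZl dotvZr mulrA -expr2 sqrtrM ?sqr_ge0 // sqrtr_sqr.
Qed.

Lemma coord_le x i : `|x 0 i| <= enorm x.
Proof.
rewrite -(sqrtr_sqr (x 0 i)) /enorm ler_sqrt ?dotv_ge0 //.
rewrite /dotv (bigD1 i) //= expr2 lerDl.
by apply: sumr_ge0 => j _; rewrite -expr2 sqr_ge0.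
Qed.

End Alg.

Section Top.
Context {R : realType} {N : nat}.

Lemma cont_sum (I : Type) (s : seq I) (F : I -> 'rV[R]_N -> R) :
  (forall i, continuous (F i)) -> continuous (fun y => \sum_(i <- s) F i y).
Proof.
move=> Fc; elim: s => [|a s IH].
  by under eq_fun do rewrite big_nil; exact: cst_continuous.
under eq_fun do rewrite big_cons.
by move=> y; apply: (@continuousD _ _ _ (F a) (fun y => \sum_(i <- s) F i y)); [exact: Fc | exact: IH].
Qed.

Lemma coordc (i : 'I_N) : continuous (fun y : 'rV[R]_N => y 0 i).
Proof. exact: coord_continuous. Qed.

Lemma dotv_contl (b : 'rV[R]_N) : continuous (fun y => dotv y b).
Proof.
apply: cont_sum => i y; apply: continuousM; first exact: coordc.
exact: cst_continuous.
Qed.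

Lemma dotv_cont : continuous (fun y : 'rV[R]_N => dotv y y).
Proof.
apply: cont_sum => i y; apply: continuousM; exact: coordc.
Qed.

Lemma enorm_cont : continuous (@enorm R N).
Proof.
move=> y; apply: (continuous_comp (f := fun y => dotv y y)); first exact: dotv_cont.
exact: sqrt_continuous.
Qed.

Lemma enormB_cont (u : 'rV[R]_N) : continuous (fun y : 'rV[R]_N => enorm (y - u)).
Proof.
move=> y; apply: (continuous_comp (f := fun y : 'rV[R]_N => y - u)); last exact: enorm_cont.
apply: (@continuousB _ _ _ id (fun=> u)) => //; exact: cst_continuous.
Qed.


Lemma key (M : nat) (a : 'I_M -> 'rV[R]_N) (eps : R) : 0 < eps ->
  exists2 del : R, 0 < del & forall y, enorm y = 1 ->
    (forall j, dotv y (a j) < del) ->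
    exists u, (enorm u = 1 /\ forall j, dotv u (a j) <= 0) /\ enorm (y - u) < eps.
Proof.
move=> eps0.
pose K := [set u : 'rV[R]_N | enorm u = 1 /\ forall j, dotv u (a j) <= 0].
pose S := [set y : 'rV[R]_N | enorm y = 1 /\ forall u, K u -> eps <= enorm (y - u)].
have notS y : enorm y = 1 -> ~ S y -> exists u, K u /\ enorm (y - u) < eps.
  move=> y1 nS; apply: contrapT => nex; apply: nS; split => // u Ku.
  rewrite leNgt; apply/negP => h; apply: nex; exists u; split => //.
case: (pselect (exists y, S y)) => [[c0 Sc0]|nS]; last first.
  exists 1 => // y y1 _; apply: notS => // Sy; apply: nS; by exists y.
pose f y := \sum_(j < M) (`|dotv y (a j)| + dotv y (a j)).
have fc : continuous f.
  apply: cont_sum => j z.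
  apply: (@continuousD _ _ _ (fun y => `|dotv y (a j)|) (fun y => dotv y (a j))).
    apply: (continuous_comp (f := fun y => dotv y (a j))); first exact: dotv_contl.
    exact: norm_continuous.
  exact: dotv_contl.
have cS : compact S.
  apply: (@subclosed_compact _ S [set v : 'rV[R]_N | forall i, `[-1, 1]%classic (v ord0 i)]); last first.
  - move=> z [z1 _] i /=; rewrite in_itv /= -ler_norml -z1; exact: coord_le.
  - have := @rV_compact R N (fun=> `[-1, 1]%classic) (fun=> @segment_compact R _ _); exact.
    have -> : S = (@enorm R N @^-1` [set 1]) `&`
       \bigcap_(u in K) ((fun y => enorm (y - u)) @^-1` [set r | eps <= r]).
      apply/funext => t0; apply/propext; split.
        move=> [h1 h2]; split => //; move=> u Ku; exact: h2.
      move=> [h1 h2]; split => //; move=> u Ku; exact: h2.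
    apply: closedI.
      apply: preimage_closed; [move=> ? _; exact: enorm_cont | exact: closed_eq].
    apply: closed_bigI => u Ku.
    apply: preimage_closed; [move=> ? _; exact: enormB_cont | exact: closed_ge].
have [c Sc cmin] := compact_EVT_min (ex_intro _ c0 Sc0) cS (continuous_subspaceT fc).
rewrite inE in Sc.
have term_ge0 y j : 0 <= `|dotv y (a j)| + dotv y (a j).
  by have := ler_norm (- dotv y (a j)); rewrite normrN; lra.
have fge0 y : 0 <= f y by apply: sumr_ge0 => j _; exact: term_ge0.
have fcpos : 0 < f c.
  rewrite lt_def fge0 andbT; apply/eqP => fc0.
  have Kc : K c.
    split; first by case: Sc.
    move=> j; rewrite leNgt; apply/negP => dpos.
    have : `|dotv c (a j)| + dotv c (a j) <= f c.
      rewrite /f (bigD1 j) //= lerDl; apply: sumr_ge0 => k _; exact: term_ge0.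
    by rewrite fc0 gtr0_norm //; lra.
  by have := Sc.2 c Kc; rewrite subrr enorm0; lra.
have hM : 0 < M%:R + 1 :> R by have := ler0n R M; lra.
pose del := f c / (2 * (M%:R + 1)).
have del0 : 0 < del by apply: divr_gt0 => //; apply: mulr_gt0.
exists del => // y y1 hy; apply: notS => // Sy.
have := cmin y (mem_set Sy).
have : f y <= M%:R * (2 * del).
  apply: (@le_trans _ _ (\sum_(j < M) (2 * del))).
    apply: ler_sum => j _.
    have := hy j; case: (lerP 0 (dotv y (a j))) => hd.
      by rewrite ger0_norm //; lra.
    by rewrite ltr0_norm //; lra.
  rewrite sumr_const card_ord -mulr_natl; lra.
have e : (M%:R + 1) * (2 * del) = f c.
  rewrite /del; field; rewrite gt_eqF //.
have e2 : M%:R * (2 * del) = (M%:R + 1) * (2 * del) - 2 * del by ring.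
rewrite e2 e; lra.
Qed.

End Top.

Theorem proposition3p1 (R : realType) (N M : nat) (vs : 'I_M -> 'rV[R]_N)
  (Hvert : forall i, is_vertex (convhull vs) (vs i))
  (v : 'rV[R]_N -> 'I_M)
  (Hv : forall x j, enorm (x - vs (v x)) <= enorm (x - vs j)) :
  forall eps : R, 0 < eps -> exists D : R, 0 < D /\
    forall x : 'rV[R]_N, D < enorm x ->
      edist ((enorm x)^-1 *: x) (C1 (convhull vs) (vs (v x))) < eps.
Proof.
move=> eps eps0.
pose B := \sum_(j < M) dotv (vs j) (vs j).
have B0 : 0 <= B by apply: sumr_ge0 => j _; exact: dotv_ge0.
have hB j : dotv (vs j) (vs j) <= B.
  rewrite /B (bigD1 j) //= lerDl; apply: sumr_ge0 => k _; exact: dotv_ge0.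
have hdel : forall i : 'I_M, exists del : R, 0 < del /\ forall y, enorm y = 1 ->
    (forall j, dotv y (vs j - vs i) < del) ->
    exists u, (enorm u = 1 /\ forall j, dotv u (vs j - vs i) <= 0) /\ enorm (y - u) < eps.
  by move=> i; have [d d0 hd] := @key R N M (fun j => vs j - vs i) eps eps0; exists d.
have [del hdel'] := choice hdel.
have q0 i : 0 <= B / (2 * del i).
  by apply: divr_ge0 => //; apply: mulr_ge0 => //; apply: ltW; case: (hdel' i).
pose D := 1 + \sum_(i < M) B / (2 * del i).
have S0 : 0 <= \sum_(i < M) B / (2 * del i) by apply: sumr_ge0 => i _; exact: q0.
exists D; split; first by rewrite /D; lra.
move=> x Dx.
have x0 : 0 < enorm x by rewrite /D in Dx; lra.
have [deli0 hdi] := hdel' (v x).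
have hDi : B < enorm x * (2 * del (v x)).
  rewrite -ltr_pdivrMr; last by apply: mulr_gt0.
  apply: (le_lt_trans _ Dx); rewrite /D.
  have : B / (2 * del (v x)) <= \sum_(i < M) B / (2 * del i).
    rewrite (bigD1 (v x)) //= lerDl; apply: sumr_ge0 => k _; exact: q0.
  lra.
have y1 : enorm ((enorm x)^-1 *: x) = 1.
  by rewrite enormZ ger0_norm ?invr_ge0 ?enorm_ge0 // mulVf // gt_eqF.
have hy j : dotv ((enorm x)^-1 *: x) (vs j - vs (v x)) < del (v x).
  have h2 := ler_pM (enorm_ge0 _) (enorm_ge0 _) (Hv x j) (Hv x j).
  rewrite -!expr2 !enorm_sq !dotvBl !dotvBr (dotvC (vs (v x)) x) (dotvC (vs j) x) in h2.
  have hw := dotv_ge0 (vs (v x)).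
  have hj := hB j.
  rewrite dotvZl dotvBr mulrC ltr_pdivrMr //.
  lra.
have [u [[u1 hu] hyu]] := hdi _ y1 hy.
rewrite /edist; apply: le_lt_trans hyu.
apply: ge_inf.
  by exists 0 => r [c _ <-]; exact: enorm_ge0.
exists u => //; split => // p [l [l0 [l1 ->]]].
have e : \sum_(j < M) l j *: (vs j - vs (v x)) = \sum_(j < M) l j *: vs j - vs (v x).
  by rewrite (eq_bigr _ (fun j _ => scalerBr _ _ _)) sumrB -scaler_suml l1 scale1r.
rewrite -e dotv_sumr; apply: sumr_le0 => j _; rewrite dotvZr.
exact: mulr_ge0_le0.
Qed.
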